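(* Let $\mathcal{C},\mathcal{D}$ be direct categories, $F:\mathcal{C}\to\mathcal{D}$ a functor, and $\mathcal{Q}\subseteq\mathcal{D}$ an interval. Then $F^{-1}(\mathcal{Q})$ is a subcategory of $\mathcal{C}$ each of whose connected components is an interval in $\mathcal{C}$, and $F^*(I_{\mathcal{Q}})=I_{\mathcal{Q}}\circ F$ is isomorphic to the direct sum of the interval modules $I_{\mathcal{P}}$ over the connected components $\mathcal{P}$ of $F^{-1}(\mathcal{Q})$.
   Context: A small category is direct if it has no infinite chain of composable non-identity morphisms and no cycle of non-identity morphisms of positive length. An interval in a direct category $\mathcal{C}$ is a nonempty connected subcategory $\mathcal{Q}$ that is convex: whenever $x,y\in\mathcal{Q}$, $\alpha:x\to z$, $\beta:z\to y$ are morphisms of $\mathcal{C}$ and $\beta\circ\alpha$ is a morphism of $\mathcal{Q}$, then $z$, $\alpha$, $\beta$ belong to $\mathcal{Q}$. The interval module $I_{\mathcal{Q}}$ (over a field $k$) takes value $k$ at objects of $\mathcal{Q}$ and $0$ elsewhere, sends morphisms of $\mathcal{Q}$ to the identity and all other morphisms to $0$. $F^{-1}(\mathcal{Q})$ is the subcategory of $\mathcal{C}$ whose objects are those $x$ with $F(x)\in\mathcal{Q}$ and whose morphisms are those $\varphi$ between such objects with $F(\varphi)$ a morphism of $\mathcal{Q}$. *)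

(* Defs.v *)
From HB Require Import structures.
From mathcomp Require Import all_boot all_algebra.
From mathcomp Require Import boolp.
From Stdlib Require Import Relations List.

Set Implicit Arguments.
Unset Strict Implicit.
Unset Printing Implicit Defensive.

Import GRing.Theory.
Local Open Scope ring_scope.

Record Cat := {
  Obj : Type;
  Hom : Obj -> Obj -> Type;
  cid : forall x, Hom x x;
  ccomp : forall x y z, Hom y z -> Hom x y -> Hom x z;
  ccomp1f : forall x y (f : Hom x y), ccomp (cid y) f = f;
  ccompf1 : forall x y (f : Hom x y), ccomp f (cid x) = f;
  ccompA : forall x y z w (f : Hom x y) (g : Hom y z) (h : Hom z w),
      ccomp h (ccomp g f) = ccomp (ccomp h g) f
}.
Arguments Hom : clear implicits.
Arguments cid {c} x.
Arguments ccomp {c x y z} _ _.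

Record Functor (C D : Cat) := {
  fobj : Obj C -> Obj D;
  fmor : forall x y, Hom C x y -> Hom D (fobj x) (fobj y);
  fmor_id : forall x, fmor (cid x) = cid (fobj x);
  fmor_comp : forall x y z (f : Hom C x y) (g : Hom C y z),
      fmor (ccomp g f) = ccomp (fmor g) (fmor f)
}.
Arguments fobj {C D} f0 x.
Arguments fmor {C D} f0 {x y} _.

Definition is_identity (C : Cat) (x y : Obj C) (f : Hom C x y) : Prop :=
  exists e : x = y, eq_rect x (Hom C x) (cid x) y e = f.

Definition no_infinite_chain (C : Cat) : Prop :=
  (~ exists (a : nat -> Obj C) (f : forall n, Hom C (a n) (a n.+1)),
        forall n, ~ is_identity (f n)) /\
  (~ exists (a : nat -> Obj C) (f : forall n, Hom C (a n.+1) (a n)),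
        forall n, ~ is_identity (f n)).

Definition no_cycle (C : Cat) : Prop :=
  ~ exists (n : nat) (a : nat -> Obj C) (f : forall i, Hom C (a i) (a i.+1)),
      (0 < n)%N /\ a n = a 0%N /\ forall i, (i < n)%N -> ~ is_identity (f i).

Definition direct (C : Cat) : Prop := no_infinite_chain C /\ no_cycle C.

Record SubCol (C : Cat) := {
  sobj : Obj C -> Prop;
  smor : forall x y, Hom C x y -> Prop
}.
Arguments sobj {C} s x.
Arguments smor {C} s {x y} _.

Definition is_subcategory (C : Cat) (S : SubCol C) : Prop :=
  (forall x y (f : Hom C x y), smor S f -> sobj S x /\ sobj S y) /\
  (forall x, sobj S x -> smor S (cid x)) /\
  (forall x y z (f : Hom C x y) (g : Hom C y z),
      smor S f -> smor S g -> smor S (ccomp g f)).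

Definition zz (C : Cat) (S : SubCol C) : relation (Obj C) :=
  clos_refl_sym_trans (Obj C) (fun a b => exists f : Hom C a b, smor S f).

Definition connected (C : Cat) (S : SubCol C) : Prop :=
  (exists x, sobj S x) /\
  (forall x y, sobj S x -> sobj S y -> zz S x y).

Definition convex (C : Cat) (S : SubCol C) : Prop :=
  forall x y z (a : Hom C x z) (b : Hom C z y),
    sobj S x -> sobj S y -> smor S (ccomp b a) ->
    sobj S z /\ smor S a /\ smor S b.

Definition is_interval (C : Cat) (S : SubCol C) : Prop :=
  is_subcategory S /\ connected S /\ convex S.

Definition component (C : Cat) (S : SubCol C) (x0 : Obj C) : SubCol C :=
  {| sobj := fun y => sobj S y /\ zz S x0 y;
     smor := fun y z (f : Hom C y z) => smor S f /\ zz S x0 y |}.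

Definition components (C : Cat) (S : SubCol C) : Type :=
  { P : SubCol C | exists x, sobj S x /\ P = component S x }.

Definition preimage (C D : Cat) (F : Functor C D) (Q : SubCol D) : SubCol C :=
  {| sobj := fun x => sobj Q (fobj F x);
     smor := fun x y (f : Hom C x y) =>
               sobj Q (fobj F x) /\ sobj Q (fobj F y) /\ smor Q (fmor F f) |}.

Definition fin_supp (k : fieldType) (I : Type) (V : I -> lmodType k)
    (f : forall i, V i) : Prop :=
  exists s : list I, forall i, f i <> 0 -> List.In i s.

Record dsum (k : fieldType) (I : Type) (V : I -> lmodType k) := DSum {
  dsum_fun :> forall i, V i;
  dsum_supp : fin_supp dsum_fun
}.

Lemma dsum_eq (k : fieldType) (I : Type) (V : I -> lmodType k)
    (f g : dsum V) : (forall i, f i = g i) -> f = g.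
Proof.
case: f g => f hf [g hg] /= H.
have E : f = g by apply: functional_extensionality_dep.
by subst g; congr DSum; apply: Prop_irrelevance.
Qed.

HB.instance Definition _ (k : fieldType) (I : Type) (V : I -> lmodType k) :=
  gen_eqMixin (dsum V).
HB.instance Definition _ (k : fieldType) (I : Type) (V : I -> lmodType k) :=
  gen_choiceMixin (dsum V).

Definition dsum_zero (k : fieldType) (I : Type) (V : I -> lmodType k) : dsum V.
Proof. by exists (fun i => 0); exists nil => i; case. Defined.

Definition dsum_add (k : fieldType) (I : Type) (V : I -> lmodType k)
  (f g : dsum V) : dsum V.
Proof.
exists (fun i => f i + g i).
case: (dsum_supp f) => s hs; case: (dsum_supp g) => t ht.
exists (s ++ t) => i hi; apply/in_or_app.
case: (boolP (f i == 0)) => [/eqP f0|/eqP fn0]; last by left; apply: hs.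
by right; apply: ht => g0; apply: hi; rewrite f0 g0 addr0.
Defined.

Definition dsum_opp (k : fieldType) (I : Type) (V : I -> lmodType k)
  (f : dsum V) : dsum V.
Proof.
exists (fun i => - f i).
case: (dsum_supp f) => s hs; exists s => i hi; apply: hs => f0; apply: hi.
by rewrite f0 oppr0.
Defined.

Definition dsum_scale (k : fieldType) (I : Type) (V : I -> lmodType k)
  (a : k) (f : dsum V) : dsum V.
Proof.
exists (fun i => a *: f i).
case: (dsum_supp f) => s hs; exists s => i hi; apply: hs => f0; apply: hi.
by rewrite f0 scaler0.
Defined.


Lemma dsum_addA (k : fieldType) (I : Type) (V : I -> lmodType k) :
  associative (@dsum_add k I V).
Proof. by move=> f g h; apply: dsum_eq => i /=; rewrite addrA. Qed.
Lemma dsum_addC (k : fieldType) (I : Type) (V : I -> lmodType k) :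
  commutative (@dsum_add k I V).
Proof. by move=> f g; apply: dsum_eq => i /=; rewrite addrC. Qed.
Lemma dsum_add0 (k : fieldType) (I : Type) (V : I -> lmodType k) :
  left_id (@dsum_zero k I V) (@dsum_add k I V).
Proof. by move=> f; apply: dsum_eq => i /=; rewrite add0r. Qed.
Lemma dsum_addN (k : fieldType) (I : Type) (V : I -> lmodType k) :
  left_inverse (@dsum_zero k I V) (@dsum_opp k I V) (@dsum_add k I V).
Proof. by move=> f; apply: dsum_eq => i /=; rewrite addNr. Qed.

HB.instance Definition _ (k : fieldType) (I : Type) (V : I -> lmodType k) :=
  GRing.isZmodule.Build (dsum V) (@dsum_addA k I V) (@dsum_addC k I V)
    (@dsum_add0 k I V) (@dsum_addN k I V).

Lemma dsum_scaleA (k : fieldType) (I : Type) (V : I -> lmodType k) a b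
  (f : dsum V) : dsum_scale a (dsum_scale b f) = dsum_scale (a * b) f.
Proof. by apply: dsum_eq => i /=; rewrite scalerA. Qed.
Lemma dsum_scale1 (k : fieldType) (I : Type) (V : I -> lmodType k) :
  left_id 1 (@dsum_scale k I V).
Proof. by move=> f; apply: dsum_eq => i /=; rewrite scale1r. Qed.
Lemma dsum_scaleDr (k : fieldType) (I : Type) (V : I -> lmodType k) :
  right_distributive (@dsum_scale k I V) +%R.
Proof. by move=> a f g; apply: dsum_eq => i /=; rewrite scalerDr. Qed.
Lemma dsum_scaleDl (k : fieldType) (I : Type) (V : I -> lmodType k)
  (f : dsum V) : {morph (fun a => @dsum_scale k I V a f) : a b / a + b}.
Proof. by move=> a b; apply: dsum_eq => i /=; rewrite scalerDl. Qed.

HB.instance Definition _ (k : fieldType) (I : Type) (V : I -> lmodType k) :=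
  GRing.Zmodule_isLmodule.Build k (dsum V) (@dsum_scaleA k I V)
    (@dsum_scale1 k I V) (@dsum_scaleDr k I V) (@dsum_scaleDl k I V).

(* Data of a C-module: a k-vector space at each object and a k-linear map
   for each morphism. (Functoriality is not part of this record; it is not
   needed to state isomorphisms, and all modules below are functorial.) *)
Record ModData (k : fieldType) (C : Cat) := {
  mspace : Obj C -> lmodType k;
  mmap : forall x y, Hom C x y -> mspace x -> mspace y;
  mmap_lin : forall x y (f : Hom C x y), linear (mmap f)
}.
Arguments mspace {k C} m x.
Arguments mmap {k C} m {x y} _ _.
Arguments mmap_lin {k C} m {x y} _.

Definition is_functorial (k : fieldType) (C : Cat) (M : ModData k C) : Prop :=
  (forall x v, mmap M (cid x) v = v) /\
  (forall x y z (f : Hom C x y) (g : Hom C y z) v,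
      mmap M (ccomp g f) v = mmap M g (mmap M f v)).

Definition mod_iso (k : fieldType) (C : Cat) (M N : ModData k C) : Prop :=
  exists eta : forall x, mspace M x -> mspace N x,
    (forall x, linear (eta x)) /\
    (forall x, bijective (eta x)) /\
    (forall x y (f : Hom C x y) v, eta y (mmap M f v) = mmap N f (eta x v)).

(* Interval (indicator) module I_Q: k (= 'rV[k]_1) at objects of Q, 0
   (= 'rV[k]_0) elsewhere; identity on morphisms of Q, 0 on the others. *)
Definition ind_space (k : fieldType) (C : Cat) (Q : SubCol C) (x : Obj C)
  : lmodType k := 'rV[k]_(nat_of_bool `[< sobj Q x >]).

Definition ind_map (k : fieldType) (C : Cat) (Q : SubCol C) (x y : Obj C)
  (f : Hom C x y) (v : ind_space k Q x) : ind_space k Q y :=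
  v *m (if `[< smor Q f >] then pid_mx 1 else 0).

Lemma ind_map_lin (k : fieldType) (C : Cat) (Q : SubCol C) (x y : Obj C)
  (f : Hom C x y) : linear (@ind_map k C Q x y f).
Proof. by move=> a u v; rewrite /ind_map mulmxDl scalemxAl. Qed.

Definition interval_module (k : fieldType) (C : Cat) (Q : SubCol C)
  : ModData k C :=
  {| mspace := ind_space k Q; mmap := @ind_map k C Q;
     mmap_lin := @ind_map_lin k C Q |}.

Definition pullback (k : fieldType) (C D : Cat) (F : Functor C D)
  (M : ModData k D) : ModData k C :=
  {| mspace := fun x => mspace M (fobj F x);
     mmap := fun x y f => mmap M (fmor F f);
     mmap_lin := fun x y f => mmap_lin M (fmor F f) |}.

Lemma lin_zero (k : fieldType) (U V : lmodType k) (g : U -> V) :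
  linear g -> g 0 = 0.
Proof.
move=> lg; have h := lg 1 0 0; rewrite !scale1r addr0 in h.
by apply: (@addrI _ (g 0)); rewrite addr0 -h.
Qed.

Definition dsum_map (k : fieldType) (C : Cat) (I : Type)
  (M : I -> ModData k C) (x y : Obj C) (f : Hom C x y)
  (v : dsum (fun i => mspace (M i) x)) : dsum (fun i => mspace (M i) y).
Proof.
exists (fun i => mmap (M i) f (v i)).
case: (dsum_supp v) => s hs; exists s => i hi; apply: hs => v0; apply: hi.
by rewrite v0 (lin_zero (mmap_lin (M i) f)).
Defined.

Lemma dsum_map_lin (k : fieldType) (C : Cat) (I : Type)
  (M : I -> ModData k C) (x y : Obj C) (f : Hom C x y) :
  linear (@dsum_map k C I M x y f).
Proof.
move=> a u v; apply: dsum_eq => i /=.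
exact: (mmap_lin (M i) f).
Qed.

Definition dsum_module (k : fieldType) (C : Cat) (I : Type)
  (M : I -> ModData k C) : ModData k C :=
  {| mspace := fun x => dsum (fun i => mspace (M i) x);
     mmap := @dsum_map k C I M;
     mmap_lin := @dsum_map_lin k C I M |}.

(* Main.v *)
Require Import Defs.
From HB Require Import structures.
From mathcomp Require Import all_boot all_algebra.
From mathcomp Require Import boolp.
From Stdlib Require Import Relations List.

Set Implicit Arguments.
Unset Strict Implicit.
Unset Printing Implicit Defensive.
Import GRing.Theory.
Local Open Scope ring_scope.

Section Vec.
Variable k : fieldType.

Definition to_k (b : bool) (v : 'rV[k]_b) : k := \sum_(j < b) v 0 j.
Definition of_k (b : bool) (a : k) : 'rV[k]_b := const_mx a.

Lemma rv_false (b : bool) (w1 w2 : 'rV[k]_b) : b = false -> w1 = w2.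
Proof. by move=> E; move: w1 w2; rewrite E => w1 w2; rewrite !thinmx0. Qed.

Lemma of_k_congr (b : bool) a1 a2 : (b -> a1 = a2) -> of_k b a1 = of_k b a2.
Proof. by case: b => [->|_] //; apply: rv_false. Qed.

Lemma of_to (b : bool) (v : 'rV[k]_b) : of_k b (to_k v) = v.
Proof.
case: b v => v; last by apply: rv_false.
apply/rowP => j; rewrite !mxE /to_k big_ord1 (ord1 j).
by congr (v _ _); apply: val_inj.
Qed.

Lemma to_of (b : bool) a : to_k (of_k b a) = if b then a else 0.
Proof. by case: b; rewrite /to_k ?big_ord1 ?big_ord0 // mxE. Qed.

Lemma to_k_lin (b : bool) a (u v : 'rV[k]_b) : to_k (a *: u + v) = a * to_k u + to_k v.
Proof.
rewrite /to_k mulr_sumr -big_split /=; apply: eq_bigr => j _.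
by rewrite !mxE.
Qed.

Lemma of_k_lin (b : bool) a x y : of_k b (a * x + y) = a *: of_k b x + of_k b y.
Proof. by apply/rowP => j; rewrite !mxE. Qed.

Lemma to_k0 (b : bool) : to_k (0 : 'rV[k]_b) = 0.
Proof. by rewrite /to_k big1 // => j _; rewrite mxE. Qed.

Lemma to_mul (b b' c : bool) (v : 'rV[k]_b) :
  to_k (v *m (if c then pid_mx 1 else 0 : 'M_(b, b'))) =
  if [&& c, b & b'] then to_k v else 0.
Proof.
case: c; last by rewrite mulmx0 to_k0.
case: b v => v; last by rewrite [v]thinmx0 mul0mx to_k0.
case: b' => /=; last by rewrite /to_k big_ord0.
by rewrite pid_mx_1 mulmx1.
Qed.

Lemma of_mul (b b' c : bool) a :
  of_k b a *m (if c then pid_mx 1 else 0 : 'M_(b, b')) =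
  of_k b' (if [&& c, b & b'] then a else 0).
Proof.
by rewrite -[LHS]of_to to_mul to_of; case: b c => [] [].
Qed.
End Vec.

Section Comp.
Variable C : Cat.
Variable S : SubCol C.

Lemma zz_component_eq a b : zz S a b -> component S a = component S b.
Proof.
move=> hab.
have E : zz S a = zz S b.
  apply: functional_extensionality_dep => y; apply: propext; split => h.
  - exact: rst_trans (rst_sym _ _ _ _ hab) h.
  - exact: rst_trans hab h.
by rewrite /component E.
Qed.

Lemma comp_eq (P1 P2 : components S) : proj1_sig P1 = proj1_sig P2 -> P1 = P2.
Proof.
case: P1 P2 => P1 h1 [P2 h2] /= E; subst P2; congr exist; exact: Prop_irrelevance.
Qed.

Lemma zz_comp x0 a b : zz S a b -> zz S x0 a -> zz (component S x0) a b.
Proof.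
elim=> {a b} [a b [f hf]|a|a b hba IH|a b c hab IH1 hbc IH2] h0.
- by apply: rst_step; exists f.
- exact: rst_refl.
- apply: rst_sym; apply: IH.
  exact: rst_trans h0 (rst_sym _ _ _ _ hba).
- apply: rst_trans (IH1 h0) (IH2 _).
  exact: rst_trans h0 hab.
Qed.
End Comp.

Section Main.
Variables (k : fieldType) (C D : Cat) (F : Functor C D) (Q : SubCol D).
Local Notation S := (preimage F Q).

Lemma comp_sub (P : components S) x : sobj (proj1_sig P) x -> sobj S x.
Proof. by case: P => P [x0 [_ E]] /=; rewrite E => -[]. Qed.

Lemma comp_at (P : components S) x : sobj (proj1_sig P) x ->
  proj1_sig P = component S x.
Proof.
case: P => P [x0 [_ E]] /=; rewrite E => -[_ h]; exact: zz_component_eq.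
Qed.

Definition compx x (hx : sobj S x) : components S :=
  exist _ (component S x) (ex_intro _ x (conj hx erefl)).

Lemma eta_supp x (v : ind_space k Q (fobj F x)) :
  fin_supp (fun P : components S =>
     (of_k `[< sobj (proj1_sig P) x >] (to_k v) : ind_space k (proj1_sig P) x)).
Proof.
case: (pselect (sobj S x)) => hx.
  exists [:: compx hx] => P hP; left.
  have hPx : sobj (proj1_sig P) x.
    apply/asboolP; apply: contra_notT hP => /negbTE E; exact: rv_false.
  by apply: comp_eq; rewrite /= (comp_at hPx).
exists nil => P hP; apply: hP; apply: rv_false; apply/negbTE/asboolP => /comp_sub.
exact.
Qed.

Definition eta x (v : ind_space k Q (fobj F x)) :
  dsum (fun P : components S => ind_space k (proj1_sig P) x) := DSum (eta_supp v).

End Main.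

Theorem lemma2p9 (k : fieldType) (C D : Cat) (F : Functor C D) (Q : SubCol D) :
  direct C -> direct D -> is_interval Q ->
  is_subcategory (preimage F Q) /\
  (forall x, sobj (preimage F Q) x -> is_interval (component (preimage F Q) x)) /\
  mod_iso (pullback F (interval_module k Q))
          (dsum_module (fun P : components (preimage F Q) =>
                          interval_module k (proj1_sig P))).
Proof.
move=> _ _ [[hQ1 [hQ2 hQ3]] [_ hQconv]].
set S := preimage F Q.
have hS : is_subcategory S.
  split; first by move=> x y f [hx [hy _]].
  split.
    by move=> x hx; split; [|split]; rewrite //= fmor_id; apply: hQ2.
  move=> x y z f g [hx [hy hf]] [_ [hz hg]]; split; [|split] => //=.
  by rewrite fmor_comp; apply: hQ3.
split => //; split.
  move=> x0 hx0; split; [|split].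
  - split.
      move=> y z f [hf hy]; have [sy sz] := hS.1 _ _ _ hf; split; split => //.
      exact: rst_trans hy (rst_step _ _ _ _ (ex_intro _ f hf)).
    split; first by move=> y [hy zy]; split => //; apply: hS.2.1.
    move=> y z w f g [hf hy] [hg _]; split => //; exact: hS.2.2 _ _ _ _ _ hf hg.
  - split; first by exists x0; split => //; apply: rst_refl.
    move=> y z [hy zy] [hz zz0]; apply: zz_comp.
      exact: rst_trans (rst_sym _ _ _ _ zy) zz0.
    exact: zy.
  - move=> x y z a b [hx zx] [hy zy] [[_ [_ hab]] _].
    rewrite /= fmor_comp in hab.
    have [hz [ha hb]] := hQconv _ _ _ _ _ hx hy hab.
    have hza : zz S x0 z by apply: rst_trans zx (rst_step _ _ _ _ (ex_intro _ a (conj hx (conj hz ha)))).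
    by split; [|split]; split.
exists (@eta k C D F Q); split.
  move=> x a u v; apply: dsum_eq => P /=.
  by rewrite to_k_lin of_k_lin.
split.
  move=> x; case: (pselect (sobj S x)) => hx.
    exists (fun w : dsum (fun P : components S => ind_space k (proj1_sig P) x) =>
      (of_k _ (to_k (w (compx hx))) : ind_space k Q (fobj F x))).
      move=> v /=; rewrite to_of.
      have -> : `[< sobj (component S x) x >] = true.
        by apply/asboolP; split => //; apply: rst_refl.
      by rewrite of_to.
    move=> w; apply: dsum_eq => P /=.
    case: (pselect (sobj (proj1_sig P) x)) => hP; last first.
      by apply: rv_false; apply/negbTE/asboolP.
    have -> : P = compx hx by apply: comp_eq; rewrite /= (comp_at hP).
    rewrite to_of (asboolT hx).
    exact: of_to.
  exists (fun _ => 0).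
    move=> v; apply: rv_false; exact/negbTE/asboolP.
  move=> w; apply: dsum_eq => P /=.
  apply: rv_false; apply/negbTE/asboolP => /comp_sub; exact.
move=> x y f v; apply: dsum_eq => P /=.
rewrite /ind_map of_mul to_mul.
apply: of_k_congr => /asboolP hPy.
case: P hPy => P [x0 [_ E]] /=; rewrite E => -[hy zy].
congr (if _ then _ else _).
apply/idP/idP.
  move=> /and3P [/asboolP hf /asboolP hx /asboolP hy'].
  have zx : zz S x0 x.
    apply: rst_trans zy (rst_sym _ _ _ _ (rst_step _ _ _ _ _)).
    by exists f; split; [|split].
  by apply/and3P; split; apply/asboolP.
move=> /and3P [/asboolP [[hx [hy' hf]] _] _ _].
by apply/and3P; split; apply/asboolP.
Qed.
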